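(* Let $R$ be a commutative ring, $\mathfrak a\subseteq I$ finitely generated ideals of $R$, and $f_0\in\mathfrak a$ an $R$-regular element. Then, as ideals of $R/(f_0)$, $$\operatorname{Kitt}(\mathfrak a,I)/(f_0)=\operatorname{Kitt}(\mathfrak a/(f_0),\,I/(f_0)).$$
   Context: For a commutative ring $A$, ideals $I=(f_1,\dots,f_r)\supseteq\mathfrak a=(a_1,\dots,a_s)$ and a matrix $(c_{ij})$ with $a_j=\sum_i c_{ij}f_i$: let $K_\bullet(\mathbf f;A)$ be the Koszul DG algebra (exterior algebra on $e_1,\dots,e_r$, $\partial e_i=f_i$), $\zeta_j=\sum_i c_{ij}e_i$, $\Gamma_\bullet$ the subalgebra generated by the $\zeta_j$, $Z_\bullet$ the subalgebra of Koszul cycles. $\operatorname{Kitt}(\mathfrak a,I)$ is the degree-$r$ component of the subalgebra generated by $\Gamma_\bullet$ and $Z_\bullet$ (the span of $\gamma\wedge z$, $\gamma\in\Gamma_j$, $z\in Z_{r-j}$), identified with an ideal of $A$ via $K_r=Ae_1\wedge\cdots\wedge e_r\cong A$; it does not depend on the choices of generators and matrix. *)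

(* Defs.v *)
From HB Require Import structures.
From mathcomp Require Import all_boot all_order all_algebra.
From mathcomp Require Import generic_quotient ring_quotient.
From mathcomp Require Import boolp.
Set Implicit Arguments. Unset Strict Implicit. Unset Printing Implicit Defensive.
Import Order.TTheory GRing.Theory Num.Theory.
Local Open Scope ring_scope.
Local Open Scope quotient_scope.

(* The Koszul DG algebra K(f; A) on r generators e_0, ..., e_(r-1).          *)
(* An element is a family of coefficients indexed by subsets S of 'I_r,      *)
(* the coefficient of e_S = e_(s1) /\ ... /\ e_(sk), s1 < ... < sk.           *)
Notation koszul A r := {ffun {set 'I_r} -> A} (only parsing).

Section Koszul.
Variables (A : comPzRingType) (r : nat).

Definition kbasis (S : {set 'I_r}) : koszul A r := [ffun U : {set 'I_r} => (U == S)%:R].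

Definition kscale (x : A) (u : koszul A r) : koszul A r :=
  [ffun S : {set 'I_r} => x * u S].

Definition kone : koszul A r := kbasis set0.
Definition ktop : koszul A r := kbasis setT.

(* sign of e_S /\ e_T = sign * e_(S :|: T) for disjoint S, T *)
Definition wsign (S T : {set 'I_r}) : A :=
  (-1) ^+ #|[set p : 'I_r * 'I_r | (p.1 \in S) && (p.2 \in T) && (p.2 < p.1)%N]|.

Definition wedge (u v : koszul A r) : koszul A r :=
  [ffun U : {set 'I_r} => \sum_(S : {set 'I_r}) \sum_(T : {set 'I_r} |
      [disjoint S & T] && (S :|: T == U)) wsign S T * u S * v T].

(* Koszul differential: d e_i = f_i, extended as a graded derivation:
   d e_S = sum_(i in S) (-1)^(#{j in S | j < i}) f_i e_(S :\ i). *)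
Definition kdiff (f : 'I_r -> A) (u : koszul A r) : koszul A r :=
  [ffun U : {set 'I_r} => \sum_(i : 'I_r | i \notin U)
      (-1) ^+ #|[set j in U | (j < i)%N]| * f i * u (i |: U)].

Definition khomog (k : nat) (u : koszul A r) : Prop :=
  forall S : {set 'I_r}, #|S| != k -> u S = 0.

Definition kcycle (f : 'I_r -> A) (k : nat) (z : koszul A r) : Prop :=
  khomog k z /\ kdiff f z = 0.

End Koszul.

Section Kitt.
Variables (A : comPzRingType) (r s : nat).

Definition kzeta (c : 'M[A]_(r, s)) (j : 'I_s) : koszul A r :=
  \sum_(i < r) kscale (c i j) (kbasis A [set i]).

(* Gamma_k : degree-k part of the subalgebra Gamma generated by the zeta_j,
   i.e. A-linear combinations of products of k of the zeta_j. *)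
Definition kgamma (c : 'M[A]_(r, s)) (k : nat) (g : koszul A r) : Prop :=
  exists (m : nat) (coef : 'I_m -> A) (idx : 'I_m -> k.-tuple 'I_s),
    g = \sum_(l < m) kscale (coef l) (\big[@wedge A r / kone A r]_(t <- idx l) kzeta c t).

(* Kitt(a, I), computed from generators f of I and a matrix c with
   a_j = sum_i c_ij f_i: the set of x in A such that x e_1/\.../\e_r lies in
   the span of the gamma /\ z, gamma in Gamma_k, z in Z_(r-k). *)
Definition kitt (f : 'I_r -> A) (c : 'M[A]_(r, s)) (x : A) : Prop :=
  exists (n : nat) (d : 'I_n -> nat) (g z : 'I_n -> koszul A r),
    [/\ forall l, kgamma c (d l) (g l),
        forall l, kcycle f (r - d l) (z l) &
        kscale x (ktop A r) = \sum_(l < n) wedge (g l) (z l)].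

End Kitt.

Section PrincipalQuotient.
Variables (A : comPzRingType) (f0 : A).

Definition pideal : {pred A} := fun x => `[< exists t : A, x = t * f0 >].

Lemma pideal_zmod_closed : zmod_closed pideal.
Proof.
split.
  by apply/asboolP; exists 0; rewrite mul0r.
move=> x y /asboolP [t ->] /asboolP [u ->]; apply/asboolP.
by exists (t - u); rewrite mulrBl.
Qed.

HB.instance Definition _ := GRing.isZmodClosed.Build A pideal pideal_zmod_closed.

Lemma pidealMl x y : y \in pideal -> x * y \in pideal.
Proof.
by move=> /asboolP [t ->]; apply/asboolP; exists (x * t); rewrite mulrA.
Qed.

Definition pquot := Quotient.quot pideal.
HB.instance Definition _ := Choice.on pquot.
HB.instance Definition _ := GRing.Zmodule.on pquot.
HB.instance Definition _ : EqQuotient A (Quotient.equiv pideal) pquot :=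
  EqQuotient.on pquot.

Definition pq_one : pquot := lift_cst pquot 1.
Definition pq_mul := lift_op2 pquot *%R.
Canonical pq_one_morph := PiConst pq_one.

Lemma pq_pi_mul : {morph \pi_pquot : x y / x * y >-> pq_mul x y}.
Proof.
move=> x y; unlock pq_mul; apply/eqP; rewrite piE Quotient.equivE.
rewrite -[_ * _](addrNK (x * repr (\pi_pquot y))) -mulrBr.
rewrite -addrA -mulrBl rpredD //.
  by apply: pidealMl; rewrite Quotient.idealrDE opprK reprK.
by rewrite mulrC; apply: pidealMl; rewrite Quotient.idealrDE opprK reprK.
Qed.
Canonical pq_mul_morph := PiMorph2 pq_pi_mul.

Lemma pq_mulA : associative pq_mul.
Proof. by move=> x y z; rewrite -[x]reprK -[y]reprK -[z]reprK !piE mulrA. Qed.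
Lemma pq_mulC : commutative pq_mul.
Proof. by move=> x y; rewrite -[x]reprK -[y]reprK !piE mulrC. Qed.
Lemma pq_mul1 : left_id pq_one pq_mul.
Proof. by move=> x; rewrite -[x]reprK !piE mul1r. Qed.
Lemma pq_mulDl : left_distributive pq_mul +%R.
Proof.
move=> x y z; rewrite -[x]reprK -[y]reprK -[z]reprK.
by rewrite !piE mulrDl.
Qed.

HB.instance Definition _ := GRing.Zmodule_isComPzRing.Build pquot
  pq_mulA pq_mulC pq_mul1 pq_mulDl.

Definition pqpi (x : A) : pquot := \pi_pquot x.

End PrincipalQuotient.

(* Main.v *)
Require Import Defs.
From HB Require Import structures.
From mathcomp Require Import all_boot all_order all_algebra.
From mathcomp Require Import generic_quotient ring_quotient boolp.
From mathcomp Require Import ring.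
Set Implicit Arguments. Unset Strict Implicit. Unset Printing Implicit Defensive.
Import GRing.Theory.
Local Open Scope ring_scope.

Section KoszulLemmas.
Variables (A : comPzRingType) (r : nat).
Local Notation K := {ffun {set 'I_r} -> A}.
Implicit Types (u v w : K) (S T U : {set 'I_r}).

Lemma kaddE u v S : (u + v) S = u S + v S.
Proof. by rewrite ffunE. Qed.
Lemma koppE u S : (- u) S = - u S.
Proof. by rewrite ffunE. Qed.
Lemma k0E S : (0 : K) S = 0.
Proof. by rewrite ffunE. Qed.
Lemma kscaleE a u S : kscale a u S = a * u S.
Proof. by rewrite ffunE. Qed.

Lemma wedgeDl u1 u2 v : wedge (u1 + u2) v = wedge u1 v + wedge u2 v.
Proof.
apply/ffunP => U; rewrite !ffunE -big_split; apply: eq_bigr => S _.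
rewrite -big_split; apply: eq_bigr => T _; by rewrite ffunE mulrDr mulrDl.
Qed.
Lemma wedgeDr u v1 v2 : wedge u (v1 + v2) = wedge u v1 + wedge u v2.
Proof.
apply/ffunP => U; rewrite !ffunE -big_split; apply: eq_bigr => S _.
rewrite -big_split; apply: eq_bigr => T _; by rewrite ffunE mulrDr.
Qed.
Lemma wedgeZl a u v : wedge (kscale a u) v = kscale a (wedge u v).
Proof.
apply/ffunP => U; rewrite !ffunE mulr_sumr; apply: eq_bigr => S _.
rewrite mulr_sumr; apply: eq_bigr => T _; rewrite ffunE; ring.
Qed.
Lemma wedgeZr a u v : wedge u (kscale a v) = kscale a (wedge u v).
Proof.
apply/ffunP => U; rewrite !ffunE mulr_sumr; apply: eq_bigr => S _.
rewrite mulr_sumr; apply: eq_bigr => T _; rewrite ffunE; ring.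
Qed.
Lemma wedge0l v : wedge 0 v = 0.
Proof.
apply/ffunP => U; rewrite !ffunE big1 // => S _; rewrite big1 // => T _.
by rewrite ffunE mulr0 mul0r.
Qed.
Lemma wedge0r u : wedge u 0 = 0.
Proof.
apply/ffunP => U; rewrite !ffunE big1 // => S _; rewrite big1 // => T _.
by rewrite ffunE mulr0.
Qed.
Lemma wedgeNr u v : wedge u (- v) = - wedge u v.
Proof.
apply/ffunP => U; rewrite !ffunE -sumrN; apply: eq_bigr => S _.
rewrite -sumrN; apply: eq_bigr => T _; rewrite ffunE; ring.
Qed.
Lemma wedgeBr u v1 v2 : wedge u (v1 - v2) = wedge u v1 - wedge u v2.
Proof. by rewrite wedgeDr wedgeNr. Qed.
Lemma wedge_suml I (s : seq I) (F : I -> K) v :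
  wedge (\sum_(i <- s) F i) v = \sum_(i <- s) wedge (F i) v.
Proof.
elim: s => [|x s IH]; first by rewrite !big_nil wedge0l.
by rewrite !big_cons wedgeDl IH.
Qed.
Lemma wedge_sumr I (s : seq I) (F : I -> K) u :
  wedge u (\sum_(i <- s) F i) = \sum_(i <- s) wedge u (F i).
Proof.
elim: s => [|x s IH]; first by rewrite !big_nil wedge0r.
by rewrite !big_cons wedgeDr IH.
Qed.

Lemma kdiffD f u v : kdiff f (u + v) = kdiff f u + kdiff f v.
Proof.
apply/ffunP => U; rewrite !ffunE -big_split; apply: eq_bigr => i _.
by rewrite ffunE mulrDr.
Qed.
Lemma kdiffZ f a u : kdiff f (kscale a u) = kscale a (kdiff f u).
Proof.
apply/ffunP => U; rewrite !ffunE mulr_sumr; apply: eq_bigr => i _.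
rewrite ffunE; ring.
Qed.
Lemma kdiff0 f : kdiff f (0 : K) = 0.
Proof. by apply/ffunP => U; rewrite !ffunE big1 // => i _; rewrite ffunE mulr0. Qed.
Lemma kdiffN f u : kdiff f (- u) = - kdiff f u.
Proof.
apply/ffunP => U; rewrite !ffunE -sumrN; apply: eq_bigr => i _.
rewrite ffunE; ring.
Qed.
Lemma kdiffB f u v : kdiff f (u - v) = kdiff f u - kdiff f v.
Proof. by rewrite kdiffD kdiffN. Qed.
Lemma kdiff_sum f I (s : seq I) (F : I -> K) :
  kdiff f (\sum_(i <- s) F i) = \sum_(i <- s) kdiff f (F i).
Proof.
elim: s => [|x s IH]; first by rewrite !big_nil kdiff0.
by rewrite !big_cons kdiffD IH.
Qed.
Lemma kscale_sum I (s : seq I) (F : I -> A) u :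
  kscale (\sum_(i <- s) F i) u = \sum_(i <- s) kscale (F i) u.
Proof.
apply/ffunP => U; rewrite ffunE sum_ffunE mulr_suml; apply: eq_bigr => i _.
by rewrite ffunE.
Qed.
Lemma kscaleA a b u : kscale a (kscale b u) = kscale (a * b) u.
Proof. by apply/ffunP => U; rewrite !ffunE mulrA. Qed.
Lemma kscaleDr a u v : kscale a (u + v) = kscale a u + kscale a v.
Proof. by apply/ffunP => U; rewrite !ffunE mulrDr. Qed.
Lemma kscale_sumr I (s : seq I) (F : I -> K) a :
  kscale a (\sum_(i <- s) F i) = \sum_(i <- s) kscale a (F i).
Proof.
apply/ffunP => U; rewrite ffunE !sum_ffunE mulr_sumr; apply: eq_bigr => i _.
by rewrite ffunE.
Qed.

End KoszulLemmas.

Section KoszulLemmas.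
Variables (A : comPzRingType) (r : nat).
Local Notation K := {ffun {set 'I_r} -> A}.
Implicit Types (u v w : K) (S T U V X Y : {set 'I_r}).

Definition inv (S T : {set 'I_r}) := [set p : 'I_r * 'I_r | (p.1 \in S) && (p.2 \in T) && (p.2 < p.1)%N].

Lemma wsignE S T : wsign A S T = (-1) ^+ #|inv S T|.
Proof. by []. Qed.

Lemma disjUl S T V : [disjoint S :|: T & V] = [disjoint S & V] && [disjoint T & V].
Proof. by rewrite -!setI_eq0 setIUl setU_eq0. Qed.
Lemma disjUr S T V : [disjoint S & T :|: V] = [disjoint S & T] && [disjoint S & V].
Proof. by rewrite -!setI_eq0 setIUr setU_eq0. Qed.

Lemma invUl S T V : [disjoint S & T] -> #|inv (S :|: T) V| = (#|inv S V| + #|inv T V|)%N.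
Proof.
move=> dST.
have -> : inv (S :|: T) V = inv S V :|: inv T V.
  by apply/setP => p; rewrite !inE -!andbA andb_orl.
rewrite cardsU (_ : _ :&: _ = set0) ?cards0 ?subn0 //.
apply/setP => p; rewrite !inE.
case pS: (p.1 \in S) => //=; by rewrite (disjointFr dST pS) /= andbF.
Qed.

Lemma invUr S T V : [disjoint T & V] -> #|inv S (T :|: V)| = (#|inv S T| + #|inv S V|)%N.
Proof.
move=> dTV.
have -> : inv S (T :|: V) = inv S T :|: inv S V.
  by apply/setP => p; rewrite !inE -!andbA andb_orl andb_orr.
rewrite cardsU (_ : _ :&: _ = set0) ?cards0 ?subn0 //.
apply/setP => p; rewrite !inE.
case pT: (p.2 \in T) => /=; last by rewrite andbF.
by rewrite (disjointFr dTV pT) /= !andbF.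
Qed.

Lemma wsign_set1 i T : wsign A [set i] T = (-1) ^+ #|[set j in T | (j < i)%N]|.
Proof.
rewrite wsignE; congr (_ ^+ _).
rewrite -[RHS](card_imset _ (fun a b (e : (i, a) = (i, b)) => congr1 snd e)).
apply: eq_card => -[x y]; rewrite !inE /=.
apply/idP/imsetP => [/andP[/andP[/eqP-> yT] lt]|[j]].
  by exists y => //; rewrite inE yT.
by rewrite inE => /andP[jT lt] [-> ->]; rewrite eqxx jT.
Qed.

Lemma wsign0r S : wsign A S set0 = 1.
Proof.
rewrite wsignE (_ : inv S set0 = set0) ?cards0 //.
by apply/setP => p; rewrite !inE andbF.
Qed.
Lemma wsign0l S : wsign A set0 S = 1.
Proof.
rewrite wsignE (_ : inv set0 S = set0) ?cards0 //.
by apply/setP => p; rewrite !inE.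
Qed.

Lemma wedgeE u v U : wedge u v U = \sum_(S : {set 'I_r}) \sum_(T : {set 'I_r})
  (if [disjoint S & T] && (S :|: T == U) then wsign A S T * u S * v T else 0).
Proof. by rewrite ffunE; apply: eq_bigr => S _; rewrite big_mkcond. Qed.

Lemma sum_pick (Y : {set 'I_r}) (P : {set 'I_r} -> bool) (F : {set 'I_r} -> A) :
  \sum_(X : {set 'I_r}) (if (Y == X) && P X then F X else 0) = if P Y then F Y else 0.
Proof.
rewrite (bigD1 Y) //= eqxx /= big1 ?addr0 // => X /negbTE neq.
by rewrite eq_sym neq.
Qed.

Lemma wedgeA u v w : wedge (wedge u v) w = wedge u (wedge v w).
Proof.
apply/ffunP => U.
pose G V S T := if [disjoint S & T] && [disjoint S :|: T & V] && (S :|: T :|: V == U)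
   then wsign A S T * wsign A (S :|: T) V * u S * v T * w V else 0.
transitivity (\sum_(V : {set 'I_r}) \sum_(S : {set 'I_r}) \sum_(T : {set 'I_r}) G V S T).
  rewrite wedgeE.
  transitivity (\sum_(X : {set 'I_r}) \sum_(V : {set 'I_r}) \sum_(S : {set 'I_r}) \sum_(T : {set 'I_r})
    (if (S :|: T == X) && ([disjoint S & T] && [disjoint X & V] && (X :|: V == U))
     then wsign A S T * wsign A X V * u S * v T * w V else 0)).
    apply: eq_bigr => X _; apply: eq_bigr => V _; rewrite wedgeE.
    case: ifP => [/andP[dXV eU]|nc].
      rewrite mulr_sumr mulr_suml; apply: eq_bigr => S _.
      rewrite mulr_sumr mulr_suml; apply: eq_bigr => T _.
      rewrite dXV eU !andbT andbC.
      by case: ifP => _; [ring | rewrite mulr0 mul0r].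
    rewrite big1 ?mulr0 ?mul0r // => S _; rewrite big1 // => T _.
    by move: nc; case: [disjoint X & V]; case: (X :|: V == U); case: (S :|: T == X); case: [disjoint S & T].
  rewrite exchange_big; apply: eq_bigr => V _.
  rewrite exchange_big; apply: eq_bigr => S _.
  rewrite exchange_big; apply: eq_bigr => T _.
  by rewrite sum_pick.
symmetry.
transitivity (\sum_(S : {set 'I_r}) \sum_(T : {set 'I_r}) \sum_(V : {set 'I_r}) G V S T).
  rewrite wedgeE.
  transitivity (\sum_(S : {set 'I_r}) \sum_(Y : {set 'I_r}) \sum_(T : {set 'I_r}) \sum_(V : {set 'I_r})
    (if (T :|: V == Y) && ([disjoint T & V] && [disjoint S & Y] && (S :|: Y == U))
     then wsign A S Y * wsign A T V * u S * v T * w V else 0)).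
    apply: eq_bigr => S _; apply: eq_bigr => Y _; rewrite wedgeE.
    case: ifP => [/andP[dSY eU]|nc].
      rewrite mulr_sumr; apply: eq_bigr => T _.
      rewrite mulr_sumr; apply: eq_bigr => V _.
      rewrite dSY eU !andbT andbC.
      by case: ifP => _; [ring | rewrite mulr0].
    rewrite big1 ?mulr0 ?mul0r // => T _; rewrite big1 // => V _.
    by move: nc; case: [disjoint S & Y]; case: (S :|: Y == U); case: (T :|: V == Y); case: [disjoint T & V].
  apply: eq_bigr => S _.
  rewrite exchange_big; apply: eq_bigr => T _.
  rewrite exchange_big; apply: eq_bigr => V _.
  rewrite sum_pick /G.
  rewrite disjUr disjUl setUA.
  case dST: [disjoint S & T]; case dSV: [disjoint S & V]; case dTV: [disjoint T & V] => //=.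
  case: eqP => // _.
  rewrite !wsignE invUl // invUr // !exprD; ring.
transitivity (\sum_(S : {set 'I_r}) \sum_(V : {set 'I_r}) \sum_(T : {set 'I_r}) G V S T).
  by apply: eq_bigr => S _; rewrite exchange_big.
by rewrite exchange_big.
Qed.

Lemma wedge1r u : wedge u (kone A r) = u.
Proof.
apply/ffunP => U; rewrite wedgeE.
transitivity (\sum_(S : {set 'I_r}) (if (U == S) && true then u S else 0)); last first.
  by rewrite sum_pick.
apply: eq_bigr => S _.
rewrite (bigD1 set0) //= big1 ?addr0; last first.
  by move=> T /negbTE nT; rewrite ffunE nT mulr0; case: ifP.
rewrite ffunE eqxx mulr1 wsign0r mul1r setU0 andbT eq_sym.
by rewrite (_ : [disjoint S & set0]) // -setI_eq0 setI0.
Qed.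

Lemma wedge1l u : wedge (kone A r) u = u.
Proof.
apply/ffunP => U; rewrite wedgeE.
rewrite (bigD1 set0) //= [X in _ + X]big1 ?addr0; last first.
  move=> S nS; apply: big1 => T _; rewrite ffunE (negbTE nS) mulr0 mul0r.
  by case: ifP.
transitivity (\sum_(T : {set 'I_r}) (if (U == T) && true then u T else 0)); last first.
  by rewrite sum_pick.
apply: eq_bigr => T _.
rewrite ffunE eqxx mulr1 wsign0l mul1r set0U eq_sym andbT.
by rewrite (_ : [disjoint set0 & T]) // -setI_eq0 set0I.
Qed.

End KoszulLemmas.

Section KoszulLemmas.
Variables (A : comPzRingType) (r : nat).
Local Notation K := {ffun {set 'I_r} -> A}.
Implicit Types (u v w : K) (S T U V X Y : {set 'I_r}).

Definition sgn (T : {set 'I_r}) (i : 'I_r) : A := (-1) ^+ #|[set j in T | (j < i)%N]|.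

Lemma sgnU1 x T i : x \notin T ->
  sgn (x |: T) i = (if (x < i)%N then -1 else 1) * sgn T i.
Proof.
move=> xT; rewrite /sgn; case: (ltnP x i) => h.
  rewrite (_ : [set j in x |: T | (j < i)%N] = x |: [set j in T | (j < i)%N]).
    by rewrite cardsU1 inE (negbTE xT) /= exprS.
  by apply/setP => j; rewrite !inE; case: (j =P x) => [->|] //=; rewrite h.
rewrite mul1r (_ : [set j in x |: T | (j < i)%N] = [set j in T | (j < i)%N]) //.
apply/setP => j; rewrite !inE; case: (j =P x) => [->|] //=.
by rewrite (negbTE xT) ltnNge h.
Qed.

Lemma sgn_sq T i : sgn T i * sgn T i = 1.
Proof. by rewrite /sgn -exprD addnn -mul2n exprM sqrrN expr1n expr1n. Qed.

Lemma flip_sign (i k : 'I_r) : k != i ->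
  (if (i < k)%N then -1 else 1) * (if (k < i)%N then -1 else 1) = - 1 :> A.
Proof.
move=> nki; case: (ltngtP i k) => h; rewrite ?mulr1 ?mul1r //.
by move: nki; rewrite (ord_inj h) eqxx.
Qed.

Lemma antisym_sum (H : 'I_r -> 'I_r -> A) :
  (forall i k, H k i = - H i k) -> (forall i, H i i = 0) ->
  \sum_(i < r) \sum_(k < r) H i k = 0.
Proof.
move=> Ha H0.
transitivity (\sum_(i < r) \sum_(k < r) ((if (i < k)%N then H i k else 0) + (if (k < i)%N then H i k else 0))).
  apply: eq_bigr => i _; apply: eq_bigr => k _.
  case: (ltngtP i k) => h; rewrite ?addr0 ?add0r //.
  by rewrite (ord_inj h) H0.
rewrite (eq_bigr (fun i : 'I_r => \sum_(k < r) (if (i < k)%N then H i k else 0) +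
   \sum_(k < r) (if (k < i)%N then H i k else 0))); last by move=> i _; rewrite big_split.
rewrite big_split /= [X in _ + X]exchange_big /=.
rewrite -big_split /= big1 // => i _; rewrite -big_split /= big1 // => k _.
by case: ifP => _; rewrite ?addr0 // [H k i]Ha subrr.
Qed.

Lemma kdiffK f u : kdiff f (kdiff f u) = 0.
Proof.
apply/ffunP => U; rewrite ffunE [RHS]ffunE.
pose H i k := if (i \notin U) && (k \notin U) && (k != i) then
  sgn U i * sgn (i |: U) k * f i * f k * u (k |: (i |: U)) else 0.
transitivity (\sum_(i < r) \sum_(k < r) H i k); last first.
  apply: antisym_sum => [i k|i]; last by rewrite /H eqxx andbF.
  rewrite /H eq_sym; case iU: (i \in U) => /=; first by rewrite andbF oppr0.
  case kU: (k \in U) => /=; first by rewrite oppr0.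
  case: eqP => [_|/eqP nik]; first by rewrite oppr0.
  rewrite setUCA (sgnU1 _ (negbT kU)) (sgnU1 _ (negbT iU)).
  case: (ltngtP i k) => h /=; try ring.
  by move: nik; rewrite (ord_inj h) eqxx.
rewrite big_mkcond; apply: eq_bigr => i _.
case: ifP => iU; last by rewrite big1 // => k _; rewrite /H iU.
rewrite ffunE mulr_sumr big_mkcond; apply: eq_bigr => k _.
rewrite /H iU /= !inE negb_or andbC.
by case: ifP => _ //; rewrite /sgn; ring.
Qed.

Lemma disj1 i T : [disjoint [set i] & T] = (i \notin T).
Proof. by rewrite disjoints1. Qed.

Lemma wedge_e1 i w V : wedge (kbasis A [set i]) w V =
  if i \in V then sgn (V :\ i) i * w (V :\ i) else 0.
Proof.
rewrite wedgeE (bigD1 [set i]) //= [X in _ + X]big1 ?addr0; last first.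
  move=> S nS; apply: big1 => T _; rewrite ffunE (negbTE nS) mulr0 mul0r.
  by case: ifP.
case: ifP => iV.
  transitivity (\sum_(T : {set 'I_r}) (if (V :\ i == T) && true then
     wsign A [set i] T * w T else 0)).
    apply: eq_bigr => T _; rewrite ffunE eqxx mulr1 andbT disj1.
    congr (if _ then _ else _).
    apply/idP/idP => [/andP[iT /eqP <-]|/eqP <-].
      by rewrite setU1K.
    by rewrite setD11 /= setD1K.
  by rewrite sum_pick wsign_set1.
apply: big1 => T _; case: ifP => // /andP[_ /eqP eV].
by move: iV; rewrite -eV !inE eqxx.
Qed.

Lemma setD1U1 (k i : 'I_r) U : k != i -> (k |: U) :\ i = k |: (U :\ i).
Proof.
move=> ki; apply/setP => j; rewrite !inE.
by case: (j =P k) => [->|] //=; rewrite ki.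
Qed.

Lemma kdiff_e1 f i w :
  kdiff f (wedge (kbasis A [set i]) w) =
  kscale (f i) w - wedge (kbasis A [set i]) (kdiff f w).
Proof.
apply/ffunP => U; rewrite ffunE [in RHS]kaddE koppE kscaleE [in RHS]wedge_e1.
case: ifP => iU; last first.
  rewrite subr0 (bigD1 i) ?iU //= [X in _ + X]big1 ?addr0; last first.
    move=> k /andP[kU ki]; rewrite wedge_e1 !inE iU eq_sym (negbTE ki).
    by rewrite mulr0.
  rewrite wedge_e1 setU11 setU1K ?iU //.
  transitivity (sgn U i * sgn U i * (f i * w U)); first by rewrite /sgn; ring.
  by rewrite sgn_sq mul1r.
have iUi : i \notin U :\ i by rewrite setD11.
rewrite [kdiff f w _]ffunE [in RHS](bigD1 i) //= setD1K //.
rewrite mulrDr !mulrA sgn_sq mul1r opprD addrA subrr add0r.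
rewrite mulr_sumr -sumrN.
rewrite [in RHS](eq_bigl (fun k => k \notin U)); last first.
  move=> k; rewrite !inE negb_and negbK.
  by case: (k =P i) => [->|]; rewrite ?iU ?andbF //= andbT.
apply: eq_bigr => k kU.
have ki : k != i by apply: contraNneq kU => ->.
rewrite wedge_e1 !inE iU orbT setD1U1 //.
rewrite {1}(_ : U = i |: (U :\ i)); last by rewrite setD1K.
rewrite -/(sgn (i |: (U :\ i)) k) -/(sgn (U :\ i) k) (sgnU1 _ iUi) (sgnU1 _ (_ : k \notin U :\ i)); last by rewrite !inE negb_and kU orbT.
case: (ltngtP i k) => h /=; try ring.
by move: ki; rewrite (ord_inj h) eqxx.
Qed.

Lemma khomog_wedge p q u v : khomog p u -> khomog q v -> khomog (p + q) (wedge u v).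
Proof.
move=> hu hv U hU; rewrite wedgeE big1 // => S _; apply: big1 => T _.
case: ifP => // /andP[d /eqP eU].
case: (#|S| =P p) => [hS|/eqP hS]; last by rewrite hu // mulr0 mul0r.
case: (#|T| =P q) => [hT|/eqP hT]; last by rewrite hv // mulr0.
move: hU; rewrite -eU cardsU (disjoint_setI0 d) cards0 subn0 hS hT eqxx.
by [].
Qed.

Lemma khomog_scale k a u : khomog k u -> khomog k (kscale a u).
Proof. by move=> h S hS; rewrite ffunE h // mulr0. Qed.
Lemma khomog0 k : khomog k (0 : K).
Proof. by move=> S _; rewrite ffunE. Qed.
Lemma khomogD k u v : khomog k u -> khomog k v -> khomog k (u + v).
Proof. by move=> hu hv S hS; rewrite ffunE hu // hv // addr0. Qed.
Lemma khomogN k u : khomog k u -> khomog k (- u).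
Proof. by move=> hu S hS; rewrite ffunE hu // oppr0. Qed.
Lemma khomog_sum k I (s : seq I) (F : I -> K) :
  (forall i, khomog k (F i)) -> khomog k (\sum_(i <- s) F i).
Proof.
move=> h; elim: s => [|x s IH]; first by rewrite big_nil; exact: khomog0.
by rewrite big_cons; apply: khomogD.
Qed.
Lemma khomog_basis S : khomog #|S| (kbasis A S).
Proof. by move=> T hT; rewrite ffunE; case: eqP => // eT; move: hT; rewrite eT eqxx. Qed.
Lemma khomog_one : khomog 0 (kone A r).
Proof. by move: (khomog_basis (S:=set0)); rewrite cards0. Qed.

Lemma khomog_kdiff f k u : khomog k u -> forall U, #|U|.+1 != k -> kdiff f u U = 0.
Proof.
move=> hu U hU; rewrite ffunE big1 // => i iU.
by rewrite hu ?mulr0 // cardsU1 iU.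
Qed.

End KoszulLemmas.

Lemma split_lshift m n (a : 'I_m) : split (lshift n a) = inl a.
Proof. exact: (unsplitK (inl a)). Qed.
Lemma split_rshift m n (b : 'I_n) : split (rshift m b) = inr b.
Proof. exact: (unsplitK (inr b)). Qed.

Definition catf T m n (h1 : 'I_m -> T) (h2 : 'I_n -> T) (i : 'I_(m + n)) : T :=
  match split i with inl a => h1 a | inr b => h2 b end.

Lemma catfL T m n (h1 : 'I_m -> T) (h2 : 'I_n -> T) a : catf h1 h2 (lshift n a) = h1 a.
Proof. by rewrite /catf split_lshift. Qed.
Lemma catfR T m n (h1 : 'I_m -> T) (h2 : 'I_n -> T) b : catf h1 h2 (rshift m b) = h2 b.
Proof. by rewrite /catf split_rshift. Qed.
Lemma catfP T m n (h1 : 'I_m -> T) (h2 : 'I_n -> T) (P : T -> Prop) :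
  (forall a, P (h1 a)) -> (forall b, P (h2 b)) -> forall i, P (catf h1 h2 i).
Proof. by move=> H1 H2 i; rewrite /catf; case: split. Qed.

Definition void_fun T : 'I_0 -> T := fun i => False_rect T (notF (ltn_ord i)).

Section Gamma.
Variables (A : comPzRingType) (r s : nat) (c : 'M[A]_(r, s)).
Local Notation K := {ffun {set 'I_r} -> A}.

Definition BW (t : seq 'I_s) : K := \big[@wedge A r / kone A r]_(j <- t) kzeta c j.

Lemma kzeta_homog j : khomog 1 (kzeta c j).
Proof.
apply: khomog_sum => i; apply: khomog_scale.
by move: (khomog_basis A (S:=[set i])); rewrite cards1.
Qed.

Lemma BW_homog t : khomog (size t) (BW t).
Proof.
elim: t => [|j t IH]; first by rewrite /BW big_nil; exact: khomog_one.
rewrite /BW big_cons; exact: khomog_wedge (kzeta_homog j) IH.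
Qed.

Lemma BW_rcons t j : BW (rcons t j) = wedge (BW t) (kzeta c j).
Proof.
elim: t => [|x t IH] /=.
  by rewrite /BW big_cons !big_nil wedge1r wedge1l.
by rewrite /BW !big_cons -/(BW _) IH wedgeA.
Qed.

Lemma kgamma_homog d g : kgamma c d g -> khomog d g.
Proof.
case=> m [coef [idx ->]]; apply: khomog_sum => l; apply: khomog_scale.
by move: (BW_homog (t:=idx l)); rewrite size_tuple.
Qed.

Lemma kgamma0 d : kgamma c d 0.
Proof. by exists 0, (fun _ => 0), (void_fun _); rewrite big_ord0. Qed.

Lemma kgammaD d g1 g2 : kgamma c d g1 -> kgamma c d g2 -> kgamma c d (g1 + g2).
Proof.
case=> m1 [c1 [i1 ->]] [m2 [c2 [i2 ->]]].
exists (m1 + m2), (catf c1 c2), (catf i1 i2).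
rewrite big_split_ord /=; congr (_ + _); apply: eq_bigr => l _;
  by rewrite ?catfL ?catfR.
Qed.

Lemma kgammaZ d a g : kgamma c d g -> kgamma c d (kscale a g).
Proof.
case=> m [coef [idx ->]]; exists m, (fun l => a * coef l), idx.
by rewrite kscale_sumr; apply: eq_bigr => l _; rewrite kscaleA.
Qed.

Lemma kgamma_BW d (t : d.-tuple 'I_s) : kgamma c d (BW t).
Proof.
exists 1, (fun _ => 1), (fun _ => t); rewrite big_ord1.
by apply/ffunP => S; rewrite ffunE mul1r.
Qed.

Lemma kgamma_sum d I (q : seq I) (F : I -> K) :
  (forall i, kgamma c d (F i)) -> kgamma c d (\sum_(i <- q) F i).
Proof.
move=> h; elim: q => [|x q IH]; first by rewrite big_nil; exact: kgamma0.
by rewrite big_cons; apply: kgammaD.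
Qed.

Lemma kgamma_step d g j : kgamma c d g -> kgamma c d.+1 (wedge g (kzeta c j)).
Proof.
case=> m [coef [idx ->]]; rewrite wedge_suml; apply: kgamma_sum => l.
rewrite wedgeZl; apply: kgammaZ.
by rewrite -BW_rcons; exact: (kgamma_BW (rcons_tuple (idx l) j)).
Qed.

Lemma kgamma_stepu d g (u : 'I_s -> A) :
  kgamma c d g -> kgamma c d.+1 (wedge g (\sum_(j < s) kscale (u j) (kzeta c j))).
Proof.
move=> h; rewrite wedge_sumr; apply: kgamma_sum => j.
by rewrite wedgeZr; apply: kgammaZ; apply: kgamma_step.
Qed.

Definition KS (f : 'I_r -> A) (v : K) : Prop :=
  exists (n : nat) (d : 'I_n -> nat) (g z : 'I_n -> K),
    [/\ forall l, kgamma c (d l) (g l),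
        forall l, kcycle f (r - d l) (z l) &
        v = \sum_(l < n) wedge (g l) (z l)].

Lemma KS0 f : KS f 0.
Proof.
exists 0, (fun _ => 0%N), (fun _ => 0), (fun _ => 0).
by split => [[]|[]|] //; rewrite big_ord0.
Qed.

Lemma KSD f v1 v2 : KS f v1 -> KS f v2 -> KS f (v1 + v2).
Proof.
case=> n1 [d1 [g1 [z1 [h1 h1' ->]]]] [n2 [d2 [g2 [z2 [h2 h2' ->]]]]].
exists (n1 + n2), (catf d1 d2), (catf g1 g2), (catf z1 z2); split.
- move=> l; rewrite /catf; case: split => a; [exact: h1|exact: h2].
- move=> l; rewrite /catf; case: split => a; [exact: h1'|exact: h2'].
rewrite big_split_ord /=; congr (_ + _); apply: eq_bigr => l _;
  by rewrite ?catfL ?catfR.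
Qed.

Lemma KS1 f d g z : kgamma c d g -> kcycle f (r - d) z -> KS f (wedge g z).
Proof.
move=> hg hz; exists 1, (fun _ => d), (fun _ => g), (fun _ => z).
by split => // ; rewrite big_ord1.
Qed.

Lemma KS_sum f I (q : seq I) (F : I -> K) :
  (forall i, KS f (F i)) -> KS f (\sum_(i <- q) F i).
Proof.
move=> h; elim: q => [|x q IH]; first by rewrite big_nil; exact: KS0.
by rewrite big_cons; apply: KSD.
Qed.

Lemma KS_homog f v : KS f v -> forall U : {set 'I_r}, #|U| != r -> v U = 0.
Proof.
case=> n [d [g [z [hg hz ->]]]] U hU.
rewrite sum_ffunE big1 // => l _.
have [le|lt] := leqP (d l) r.
  apply: (khomog_wedge (kgamma_homog (hg l)) (proj1 (hz l))).
  by rewrite subnKC.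
have -> : g l = 0.
  apply/ffunP => S; rewrite ffunE; apply: (kgamma_homog (hg l)).
  rewrite neq_ltn; apply/orP; left; apply: leq_ltn_trans lt.
  by rewrite -[X in (_ <= X)%N](card_ord r) max_card.
by rewrite wedge0l ffunE.
Qed.

End Gamma.

Section Map.
Variables (A B : comPzRingType) (phi : {rmorphism A -> B}) (r : nat).
Local Notation KA := {ffun {set 'I_r} -> A}.

Definition kmap (u : KA) : {ffun {set 'I_r} -> B} := [ffun S => phi (u S)].

Lemma kmapD u v : kmap (u + v) = kmap u + kmap v.
Proof. by apply/ffunP => S; rewrite !ffunE rmorphD. Qed.
Lemma kmap0 : kmap 0 = 0.
Proof. by apply/ffunP => S; rewrite !ffunE rmorph0. Qed.
Lemma kmapN u : kmap (- u) = - kmap u.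
Proof. by apply/ffunP => S; rewrite !ffunE rmorphN. Qed.
Lemma kmap_sum I (q : seq I) (F : I -> KA) :
  kmap (\sum_(i <- q) F i) = \sum_(i <- q) kmap (F i).
Proof.
elim: q => [|x q IH]; first by rewrite !big_nil kmap0.
by rewrite !big_cons kmapD IH.
Qed.
Lemma kmapZ a u : kmap (kscale a u) = kscale (phi a) (kmap u).
Proof. by apply/ffunP => S; rewrite !ffunE rmorphM. Qed.
Lemma kmap_basis S : kmap (kbasis A S) = kbasis B S.
Proof. by apply/ffunP => T; rewrite !ffunE rmorph_nat. Qed.
Lemma kmap_wedge u v : kmap (wedge u v) = wedge (kmap u) (kmap v).
Proof.
apply/ffunP => U; rewrite !ffunE rmorph_sum; apply: eq_bigr => S _.
rewrite rmorph_sum; apply: eq_bigr => T _.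
by rewrite !rmorphM !ffunE rmorphXn rmorphN1.
Qed.
Lemma kmap_kdiff f u : kmap (kdiff f u) = kdiff (fun i => phi (f i)) (kmap u).
Proof.
apply/ffunP => U; rewrite !ffunE rmorph_sum; apply: eq_bigr => i _.
by rewrite !rmorphM !ffunE rmorphXn rmorphN1.
Qed.

Variable s : nat.
Lemma kmap_kzeta (c : 'M[A]_(r, s)) j : kmap (kzeta c j) = kzeta (map_mx phi c) j.
Proof.
rewrite /kzeta kmap_sum; apply: eq_bigr => i _.
by rewrite kmapZ kmap_basis mxE.
Qed.
Lemma kmap_BW (c : 'M[A]_(r, s)) t : kmap (BW c t) = BW (map_mx phi c) t.
Proof.
elim: t => [|j t IH]; first by rewrite /BW !big_nil /kone kmap_basis.
by rewrite /BW !big_cons kmap_wedge -/(BW _ _) IH kmap_kzeta.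
Qed.
Lemma kmap_gamma (c : 'M[A]_(r, s)) d g :
  kgamma c d g -> kgamma (map_mx phi c) d (kmap g).
Proof.
case=> m [coef [idx ->]]; exists m, (fun l => phi (coef l)), idx.
rewrite kmap_sum; apply: eq_bigr => l _; by rewrite kmapZ kmap_BW.
Qed.
Lemma kmap_cycle f k z : kcycle f k z -> kcycle (fun i => phi (f i)) k (kmap z).
Proof.
case=> hh hd; split; first by move=> S hS; rewrite ffunE hh // rmorph0.
by rewrite -kmap_kdiff hd kmap0.
Qed.
Lemma kmap_KS (c : 'M[A]_(r, s)) f v :
  KS c f v -> KS (map_mx phi c) (fun i => phi (f i)) (kmap v).
Proof.
case=> n [d [g [z [hg hz ->]]]].
exists n, d, (fun l => kmap (g l)), (fun l => kmap (z l)); split.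
- by move=> l; apply: kmap_gamma.
- by move=> l; apply: kmap_cycle.
by rewrite kmap_sum; apply: eq_bigr => l _; rewrite kmap_wedge.
Qed.
End Map.
Local Open Scope quotient_scope.

Section PQ.
Variables (R : comPzRingType) (f0 : R).
Lemma pqpi_zmod : zmod_morphism (pqpi f0).
Proof. by move=> x y; rewrite /pqpi !piE. Qed.
Lemma pqpi_mon : monoid_morphism (pqpi f0).
Proof. by split; [|move=> x y]; rewrite /pqpi !piE. Qed.
HB.instance Definition _ :=
  GRing.isZmodMorphism.Build R (pquot f0) (pqpi f0) pqpi_zmod.
HB.instance Definition _ :=
  GRing.isMonoidMorphism.Build R (pquot f0) (pqpi f0) pqpi_mon.
Lemma pqpi_eq0 x : pqpi f0 x = 0 -> exists t, x = t * f0.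
Proof.
move=> H. have : pqpi f0 x == pqpi f0 0.
  by rewrite H /pqpi; apply/eqP; symmetry; rewrite piE.
by rewrite /pqpi piE Quotient.equivE subr0 => /asboolP.
Qed.
Lemma pqpiK y : pqpi f0 (repr y) = y.
Proof. exact: reprK. Qed.
End PQ.

Section Core.
Variables (R : comPzRingType) (r s : nat) (f : 'I_r -> R) (a : 'I_s -> R)
  (c : 'M[R]_(r, s)) (f0 : R) (u : 'I_s -> R).
Hypothesis Ha : forall j : 'I_s, a j = \sum_(i < r) c i j * f i.
Hypothesis Hu : f0 = \sum_(j < s) u j * a j.
Hypothesis Hreg : forall x : R, x * f0 = 0 -> x = 0.
Local Notation phi := (pqpi f0).
Local Notation K := {ffun {set 'I_r} -> R}.

Lemma core d (gb zb : {ffun {set 'I_r} -> pquot f0}) :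
  kgamma (map_mx phi c) d gb -> kcycle (fun i => phi (f i)) (r - d) zb ->
  exists v, KS c f v /\ kmap phi v = wedge gb zb.
Proof.
case=> m [coef [idx ->]] [hzh hzd].
pose g : K := \sum_(l < m) kscale (repr (coef l)) (BW c (idx l)).
have kg : kgamma c d g by exists m, (fun l => repr (coef l)), idx.
have mg : kmap phi g = \sum_(l < m) kscale (coef l)
    (\big[@wedge _ r/kone _ r]_(t <- idx l) kzeta (map_mx phi c) t).
  rewrite kmap_sum; apply: eq_bigr => l _.
  by rewrite kmapZ kmap_BW; congr kscale; exact: reprK.
set k := (r - d)%N.
pose z : K := [ffun S : {set 'I_r} => if #|S| == k then repr (zb S) else 0].
have hz : khomog k z by move=> S hS; rewrite ffunE (negbTE hS).
have mz : kmap phi z = zb.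
  apply/ffunP => S; rewrite !ffunE; case: eqP => [_|/eqP hS].
    exact: reprK.
  by rewrite rmorph0 hzh.
have ex : forall S, exists t, kdiff f z S = t * f0.
  move=> S; apply: pqpi_eq0.
  have := congr1 (fun v : {ffun {set 'I_r} -> pquot f0} => v S) (kmap_kdiff phi f z).
  by rewrite ffunE => ->; rewrite mz hzd ffunE.
have [wf wfE] := fin_all_exists ex.
pose w : K := [ffun S : {set 'I_r} => wf S].
have wE : forall S, kdiff f z S = w S * f0 by move=> S; rewrite wfE ffunE.
have dzw : kdiff f z = kscale f0 w by apply/ffunP => S; rewrite wE kscaleE mulrC.
have wh : forall S : {set 'I_r}, #|S|.+1 != k -> w S = 0.
  by move=> S hS; apply: Hreg; rewrite -wE (khomog_kdiff f hz).
have dw : kdiff f w = 0.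
  apply/ffunP => S; rewrite k0E; apply: Hreg.
  have := congr1 (fun v : K => v S) (kdiffK f z).
  by rewrite /= dzw kdiffZ kscaleE k0E mulrC.
pose zeta : K := \sum_(j < s) kscale (u j) (kzeta c j).
have dzeta : kdiff f (wedge zeta w) = kscale f0 w.
  rewrite /zeta wedge_suml kdiff_sum Hu kscale_sum; apply: eq_bigr => j _.
  rewrite wedgeZl kdiffZ /kzeta wedge_suml kdiff_sum Ha mulr_sumr kscale_sum.
  rewrite kscale_sumr; apply: eq_bigr => i _.
  by rewrite wedgeZl kdiffZ kdiff_e1 dw wedge0r subr0 !kscaleA mulrA.
have hzw : khomog k (wedge zeta w).
  have hzeta : khomog 1 zeta.
    by apply: khomog_sum => j; apply: khomog_scale; apply: kzeta_homog.
  case Ek : k => [|k'].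
    rewrite (_ : w = 0) ?wedge0r; first exact: khomog0.
    by apply/ffunP => S; rewrite wh ?ffunE // Ek.
  apply: (khomog_wedge hzeta) => S hS; apply: wh; by rewrite Ek eqSS.
pose z1 := z - wedge zeta w.
have hz1 : kcycle f k z1.
  split; first by apply: khomogD => //; apply: khomogN.
  by rewrite /z1 kdiffB dzw dzeta subrr.
have hw : kcycle f (r - d.+1) w.
  split => // S hS; apply: wh.
  move: hS; rewrite subnS -/k; case: (k) => // k' /=.
exists (wedge g z1 + wedge (wedge g zeta) w); split.
  apply: KSD; first exact: KS1 kg hz1.
  exact: KS1 (kgamma_stepu u kg) hw.
by rewrite wedgeA -wedgeDr /z1 subrK kmap_wedge mg mz.
Qed.

End Core.

Lemma ktopE (B : comPzRingType) r (x : B) U :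
  kscale x (ktop B r) U = if U == setT then x else 0.
Proof. by rewrite !ffunE; case: eqP; rewrite ?mulr1 ?mulr0. Qed.

Lemma card_neq_setT r (U : {set 'I_r}) : U != setT -> #|U| != r.
Proof.
move=> nU; apply/negP => /eqP hU; move/negP: nU; apply.
by rewrite eqEcard subsetT cardsT card_ord hU leqnn.
Qed.

Theorem theorem4p26 (R : comPzRingType) (r s : nat)
    (f : 'I_r -> R) (a : 'I_s -> R) (c : 'M[R]_(r, s)) (f0 : R) :
  (forall j : 'I_s, a j = \sum_(i < r) c i j * f i) ->
  (exists u : 'I_s -> R, f0 = \sum_(j < s) u j * a j) ->
  (forall x : R, x * f0 = 0 -> x = 0) ->
  forall y : pquot f0,
    (exists x : R, kitt f c x /\ pqpi f0 x = y) <->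
    kitt (fun i => pqpi f0 (f i)) (map_mx (pqpi f0) c) y.
Proof.
move=> Ha [u Hu] Hreg y; split.
  case=> x [hx <-].
  have := kmap_KS (pqpi f0) hx.
  rewrite kmapZ /ktop kmap_basis; exact.
case=> n [d [gb [zb [hg hz hy]]]].
have ex : forall l, exists v, KS c f v /\ kmap (pqpi f0) v = wedge (gb l) (zb l).
  by move=> l; apply: (core Ha Hu Hreg (hg l) (hz l)).
have [V hV] := fin_all_exists ex.
pose W := \sum_(l < n) V l.
have KW : KS c f W by apply: KS_sum => l; case: (hV l).
have mW : kmap (pqpi f0) W = kscale y (ktop _ r).
  by rewrite kmap_sum hy; apply: eq_bigr => l _; case: (hV l).
have EW : W = kscale (W setT) (ktop R r).
  apply/ffunP => U; rewrite ktopE; case: eqP => [->//|/eqP nU].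
  exact: KS_homog KW _ (card_neq_setT nU).
exists (W setT); split.
  by rewrite /kitt -/(KS c f _) -EW.
have := congr1 (fun v : {ffun {set 'I_r} -> pquot f0} => v setT) mW.
by rewrite /= ffunE ktopE eqxx.
Qed.
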